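(* Let $n$ be an odd prime and $\omega_n=e^{2\pi i/n}$. Define $$A_n=\{\Re(\omega_n),\Re(\omega_n^2),\dots,\Re(\omega_n^{(n-1)/2})\},\qquad B_n=\{i\,\Im(\omega_n), i\,\Im(\omega_n^2),\dots,i\,\Im(\omega_n^{(n-1)/2})\}.$$ Then $A_n\cup B_n$ is a basis for the cyclotomic field $\mathbb{Q}(\omega_n)$ as a vector space over $\mathbb{Q}$.
   Context: $\Re$ and $\Im$ denote real and imaginary parts of a complex number. *)

(* Defs.v *)
From HB Require Import structures.
From mathcomp Require Import all_boot all_order all_algebra.
From mathcomp Require Import reals trigo.
From mathcomp Require Import complex.
Set Implicit Arguments. Unset Strict Implicit. Unset Printing Implicit Defensive.
Import Order.TTheory GRing.Theory Num.Theory.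
Local Open Scope ring_scope.
Local Open Scope complex_scope.

Definition omega (R : realType) (n : nat) : R[i] :=
  (cos (2 * pi / n%:R)) +i* (sin (2 * pi / n%:R)).

Definition is_subfield (R : realType) (K : R[i] -> Prop) : Prop :=
  K 0 /\ K 1 /\
  (forall x y, K x -> K y -> K (x + y)) /\
  (forall x, K x -> K (- x)) /\
  (forall x y, K x -> K y -> K (x * y)) /\
  (forall x, K x -> x != 0 -> K (x^-1)).

Definition Qadj (R : realType) (z : R[i]) : R[i] -> Prop :=
  fun x => forall K, is_subfield K -> K z -> K x.

Definition is_Q_basis (R : realType) (V : R[i] -> Prop) (m : nat) (b : 'I_m -> R[i]) : Prop :=
  [/\ (forall j, V (b j)),
      (forall c : 'I_m -> rat, \sum_(j < m) ratr (c j) * b j = 0 -> forall j, c j = 0) &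
      (forall x, V x -> exists c : 'I_m -> rat, x = \sum_(j < m) ratr (c j) * b j)].

(* The family A_n u B_n, indexed by 'I_((n-1)/2) + 'I_((n-1)/2) flattened:
   index j < (n-1)/2 gives Re(omega^(j+1)), index (n-1)/2 + j gives i Im(omega^(j+1)). *)
Definition AB_family (R : realType) (n : nat) (k : 'I_(n.-1./2 + n.-1./2)) : R[i] :=
  match split k with
  | inl j => (complex.Re (omega R n ^+ j.+1))%:C
  | inr j => 'i * (complex.Im (omega R n ^+ j.+1))%:C
  end.

(* Main.v *)
Require Import Defs.
From HB Require Import structures.
From mathcomp Require Import all_boot all_order all_algebra all_field.
From mathcomp Require Import reals trigo complex ring lra zify.
Set Implicit Arguments. Unset Strict Implicit. Unset Printing Implicit Defensive.
Import Order.TTheory GRing.Theory Num.Theory.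
Local Open Scope ring_scope.

Definition Phi (n : nat) : {poly rat} := \poly_(i < n) 1.

Lemma map_Phi (F : numFieldType) n :
  map_poly (ratr : rat -> F) (Phi n) = \poly_(i < n) 1.
Proof.
apply/polyP => i; rewrite coef_map !coef_poly; case: (i < n)%N => /=.
  by rewrite rmorph1. by rewrite rmorph0.
Qed.

Lemma size_Phi n : size (Phi n) = n.
Proof.
case: n => [|n]; first by rewrite /Phi poly_def big_ord0 size_poly0.
by apply: size_poly_eq; rewrite oner_eq0.
Qed.

Lemma Phi_root_sum (F : numFieldType) n (w : F) :
  w ^+ n = 1 -> w != 1 -> (map_poly (ratr : rat -> F) (Phi n)).[w] = 0.
Proof.
move=> wn w1; rewrite map_Phi horner_poly.
have : (w - 1) * \sum_(i < n) w ^+ i = 0 by rewrite -subrX1 wn subrr.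
move/eqP; rewrite mulf_eq0 => /orP[]; first by rewrite subr_eq0 (negPf w1).
by move/eqP=> S; rewrite -[RHS]S; apply: eq_bigr => i _; rewrite mul1r.
Qed.

Lemma Phi_irr n : prime n -> irreducible_poly (Phi n).
Proof.
move=> Hn; have n_gt1 := prime_gt1 Hn; have n_gt0 := prime_gt0 Hn.
have PhiN0 : Phi n != 0 by rewrite -size_poly_eq0 size_Phi -lt0n.
split; first by rewrite size_Phi.
move=> q Hq1 Hqd.
have q0 : q != 0 by apply: contraNneq PhiN0 => q0; move: Hqd; rewrite q0 dvd0p.
have [w rootw] : exists w : algC, root (map_poly ratr q) w.
  by apply/closed_rootP; rewrite size_map_poly.
have rootPhi : root (map_poly ratr (Phi n)) w by apply: root_dvdp rootw; rewrite dvdp_map.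
move: rootPhi; rewrite /root map_Phi horner_poly => /eqP S.
have wn : w ^+ n = 1.
  have S' : \sum_(i < n) w ^+ i = 0 by rewrite -[RHS]S; apply: eq_bigr => i _; rewrite mul1r.
  by apply/eqP; rewrite -subr_eq0 subrX1 S' mulr0.
have w1 : w != 1.
  apply/eqP => w1; move: S; rewrite w1.
  under eq_bigr do rewrite expr1n mulr1.
  by rewrite sumr_const card_ord => /eqP; rewrite pnatr_eq0; case: n n_gt0 {Hn n_gt1 PhiN0 Hqd wn}.
have prim : n.-primitive_root w.
  have [m pm mdn] := prim_order_exists n_gt0 wn.
  have [_ /(_ m mdn)/orP[/eqP m1|/eqP mn]] := primeP Hn; last by rewrite -mn.
  by move: (prim_expr_order pm); rewrite m1 expr1 => /eqP; rewrite (negPf w1).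
have [pf [Dpf _] Hdv] := minCpolyP w.
have pfq : pf %| q by rewrite -Hdv.
have spf : size pf = n.
  rewrite -(size_map_poly (ratr : rat -> algC)) -Dpf (minCpoly_cyclotomic prim).
  by rewrite size_cyclotomic totient_prime // prednK.
rewrite -dvdp_size_eqp //; apply/eqP/anti_leq.
rewrite (dvdp_leq PhiN0 Hqd) /= size_Phi -{1}spf.
exact: dvdp_leq q0 pfq.
Qed.

Section Gen.
Variables (F : numFieldType) (n : nat) (w : F).
Hypotheses (Hn : prime n) (wn : w ^+ n = 1) (w1 : w != 1).

Definition ev (P : {poly rat}) : F := (map_poly (ratr : rat -> F) P).[w].

Lemma evD P Q : ev (P + Q) = ev P + ev Q.
Proof. by rewrite /ev rmorphD hornerD. Qed.
Lemma evM P Q : ev (P * Q) = ev P * ev Q.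
Proof. by rewrite /ev rmorphM hornerM. Qed.
Lemma evN P : ev (- P) = - ev P.
Proof. by rewrite /ev rmorphN hornerN. Qed.
Lemma evC c : ev c%:P = ratr c.
Proof. by rewrite /ev map_polyC hornerC. Qed.
Lemma evX : ev 'X = w.
Proof. by rewrite /ev map_polyX hornerX. Qed.
Lemma ev_Phi : ev (Phi n) = 0.
Proof. exact: Phi_root_sum. Qed.

Lemma ev_bezout P : ~~ (Phi n %| P) -> exists Q c, c != 0 /\ ev Q * ev P = ratr c.
Proof.
move=> nd; have := irreducible_poly_coprime P (Phi_irr Hn); rewrite nd.
move/Bezout_coprimepP=> [[u v] /= Huv].
move: (eqp_size Huv); rewrite size_poly1 => /eqP/size_poly1P [c c0 Hc].
exists v, c; split => //.
by rewrite -evC -Hc evD !evM ev_Phi mulr0 add0r.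
Qed.

Lemma ev_eq0 P : ev P = 0 -> Phi n %| P.
Proof.
move=> H; apply/negPn/negP => /ev_bezout [Q [c [c0]]].
by rewrite H mulr0 => /esym/eqP; rewrite fmorph_eq0 (negPf c0).
Qed.

Lemma ev_inv P : ev P != 0 -> exists Q, ev Q * ev P = 1.
Proof.
move=> H; have nd : ~~ (Phi n %| P).
  by apply: contra H => /dvdpP [Q ->]; rewrite evM ev_Phi mulr0.
have [Q [c [c0 HQ]]] := ev_bezout nd.
exists (c^-1%:P * Q); rewrite evM -mulrA HQ evC fmorphV mulVf //.
by rewrite fmorph_eq0.
Qed.

Lemma map_poly_ratr k (E : nat -> rat) :
  map_poly (ratr : rat -> F) (\poly_(i < k) E i) = \poly_(i < k) ratr (E i).
Proof.
apply/polyP => i; rewrite coef_map !coef_poly; case: (i < k)%N => //.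
exact: raddf0.
Qed.

Lemma w_neq0 : w != 0.
Proof.
apply/eqP => w0; move: wn; rewrite w0 expr0n eqn0Ngt prime_gt0 //= => /eqP.
by rewrite eq_sym oner_eq0.
Qed.

Variable m : nat.
Hypothesis Hm : n = (m + m).+1.

Lemma indep (e : 'I_(m + m) -> rat) :
  \sum_(i < m + m) ratr (e i) * w ^+ i.+1 = 0 -> forall i, e i = 0.
Proof.
move=> H.
pose E := fun i : nat => oapp e 0 (insub i).
pose P := \poly_(i < m + m) E i.
have evP : ev P * w = 0.
  rewrite -[RHS]H /ev map_poly_ratr horner_poly mulr_suml.
  apply: eq_bigr => i _; rewrite /E valK /= exprSr mulrA //.
have {evP} /ev_eq0 dP : ev P = 0.
  by move/eqP: evP; rewrite mulf_eq0 (negPf w_neq0) orbF => /eqP.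
have P0 : P = 0.
  apply/eqP/negPn/negP => P0.
  have := dvdp_leq P0 dP; rewrite size_Phi.
  have := size_poly (m + m) E; rewrite -/P Hm => h1 h2.
  by have := leq_trans h2 h1; rewrite ltnn.
move=> i; have := congr1 (fun p : {poly rat} => p`_i) P0.
by rewrite coef_poly ltn_ord coef0 /E valK.
Qed.

Lemma sum_pows : \sum_(i < m + m) w ^+ i.+1 = -1.
Proof.
have := ev_Phi; rewrite /ev /Phi map_poly_ratr horner_poly.
subst n; rewrite big_ord_recl expr0 rmorph1 mul1r => /eqP; rewrite addrC addr_eq0 => /eqP <-.
by apply: eq_bigr => i _; rewrite mul1r.
Qed.

Lemma ev_span (S : F -> Prop) :
  S 0 -> (forall x y, S x -> S y -> S (x + y)) -> (forall q x, S x -> S (ratr q * x)) ->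
  (forall i : 'I_(m + m), S (w ^+ i.+1)) -> forall P, S (ev P).
Proof.
move=> S0 SD SZ Sw P.
have Spow : forall k, S (w ^+ k).
  move=> k; rewrite -(GRing.expr_mod k wn).
  have : (k %% n < n)%N by rewrite ltn_mod prime_gt0.
  case: (k %% n)%N => [_|r hr].
    have -> : w ^+ 0 = ratr (-1) * \sum_(i < m + m) w ^+ i.+1.
      by rewrite sum_pows rmorphN rmorph1 mulN1r opprK expr0.
    by apply: SZ; apply: big_ind => // i _; apply: Sw.
  have hr' : (r < m + m)%N by move: hr; rewrite Hm ltnS.
  exact: (Sw (Ordinal hr')).
rewrite /ev horner_coef size_map_poly.
apply: big_ind => // i _; rewrite coef_map; exact: SZ.
Qed.
End Gen.

Section Spec.
Local Open Scope complex_scope.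
Variables (R : realType) (n : nat).
Hypotheses (Hn : prime n) (Hodd : odd n).

Let th : R := 2 * pi / n%:R.
Let w : R[i] := omega R n.

Lemma n_neq0 : (n%:R : R) != 0.
Proof. by rewrite pnatr_eq0 -lt0n prime_gt0. Qed.

Lemma nth_eq : n%:R * th = pi *+ 2.
Proof. by rewrite /th mulrC divfK ?n_neq0 // mulr_natl. Qed.

Lemma omega_exp k : w ^+ k = cos (k%:R * th) +i* sin (k%:R * th).
Proof.
elim: k => [|k IH]; first by rewrite expr0 mul0r cos0 sin0.
rewrite exprSr IH /w /omega -/th.
rewrite -addn1 natrD mulrDl mul1r cosD sinD.
apply/eqP; rewrite eq_complex /= !eqxx /=.
by rewrite [X in _ == X]addrC eqxx.
Qed.

Lemma omega_n : w ^+ n = 1.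
Proof. by rewrite omega_exp nth_eq cos2pi sin2pi. Qed.

Lemma n_gt2 : (2 < n)%N.
Proof.
have := prime_gt1 Hn; rewrite leq_eqVlt => /orP[/eqP n2|//].
by move: Hodd; rewrite -n2.
Qed.

Lemma omega_neq1 : w != 1.
Proof.
apply/eqP => w1.
have : complex.Im w = 0 by rewrite w1.
rewrite /w /omega /= -/th => s0.
have : 0 < sin th.
  apply: sin_gt0_pi; apply/andP; split.
    by rewrite /th divr_gt0 // ?mulr_gt0 ?pi_gt0 // ltr0n prime_gt0.
  rewrite /th ltr_pdivrMr ?ltr0n ?prime_gt0 // mulrC ltr_pM2l ?pi_gt0 //.
  by rewrite ltr_nat n_gt2.
by rewrite s0 ltxx.
Qed.

Lemma omega_conj k : (k <= n)%N ->
  w ^+ (n - k) = cos (k%:R * th) +i* (- sin (k%:R * th)).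
Proof.
move=> kn; rewrite omega_exp natrB // mulrBl nth_eq cosB sinB cos2pi sin2pi.
by rewrite mul1r mul0r addr0 mul0r mul1r sub0r.
Qed.


Let m := n.-1./2.

Lemma Hm : n = (m + m).+1.
Proof.
have n0 := prime_gt0 Hn.
have := odd_double_half n.-1; move: Hodd; rewrite -{1 3}(prednK n0) /= => /negPf ->.
by rewrite add0n -addnn => ->; rewrite prednK.
Qed.

Let bl (j : 'I_m) : R[i] := (complex.Re (w ^+ j.+1))%:C.
Let br (j : 'I_m) : R[i] := 'i * (complex.Im (w ^+ j.+1))%:C.

Lemma AB_l j : @AB_family R n (lshift m j) = bl j.
Proof. by rewrite /AB_family -[lshift m j]/(unsplit (inl j)) unsplitK. Qed.
Lemma AB_r j : @AB_family R n (rshift m j) = br j.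
Proof. by rewrite /AB_family -[rshift m j]/(unsplit (inr j)) unsplitK. Qed.

Lemma w_pos (j : 'I_m) : w ^+ j.+1 = bl j + br j.
Proof. exact: complexE. Qed.

Lemma w_neg (j : 'I_m) : w ^+ (n - j.+1) = bl j - br j.
Proof.
have jn : (j.+1 <= n)%N by move: (ltn_ord j) Hm; lia.
rewrite omega_conj // /bl /br omega_exp /=.
apply/eqP; rewrite eq_complex /=; apply/andP; split; apply/eqP; ring.
Qed.


Lemma sl (j : 'I_m) : split (lshift m j) = inl j.
Proof. exact: (unsplitK (inl j)). Qed.
Lemma sr (j : 'I_m) : split (rshift m j) = inr j.
Proof. exact: (unsplitK (inr j)). Qed.

Lemma main : is_Q_basis (Qadj (omega R n)) (@AB_family R n).
Proof.
have wn : w ^+ n = 1 := omega_n.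
have w1 : w != 1 := omega_neq1.
have two0 : (2 : R[i]) != 0 by rewrite pnatr_eq0.
split.
- move=> k K [K0 [K1 [KD [KN [KM KV]]]]] Kw.
  have Kp : forall k, K (w ^+ k).
    by elim => [|k' IH]; [rewrite expr0 | rewrite exprS; apply: KM].
  have K2 : K (2^-1).
    apply: KV => //; have -> : (2 : R[i]) = 1 + 1 by rewrite -mulr2n.
    exact: KD.
  rewrite -(splitK k); case: (split k) => j /=.
    rewrite -[lshift m j]/(lshift m j) AB_l.
    have -> : bl j = (w ^+ j.+1 + w ^+ (n - j.+1)) * 2^-1.
      by rewrite w_pos w_neg; field.
    by apply: KM => //; apply: KD.
  rewrite AB_r.
  have -> : br j = (w ^+ j.+1 + - w ^+ (n - j.+1)) * 2^-1.
    by rewrite w_pos w_neg; field.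
  by apply: KM => //; apply: KD => //; apply: KN.
- move=> c Hc.
  pose cl j := c (lshift m j); pose cr j := c (rshift m j).
  pose e (k : 'I_(m + m)) := match split k with
    | inl j => (cl j + cr j) / 2
    | inr j => (cl (rev_ord j) - cr (rev_ord j)) / 2 end.
  have He : \sum_(i < m + m) ratr (e i) * w ^+ i.+1 = 0.
    rewrite -[RHS]Hc !big_split_ord /=.
    have E1 : \sum_(j < m) ratr (e (lshift m j)) * w ^+ (lshift m j).+1 =
              \sum_(j < m) ratr ((cl j + cr j) / 2) * w ^+ j.+1.
      by apply: eq_bigr => j _; rewrite /e sl.
    have E2 : \sum_(j < m) ratr (e (rshift m j)) * w ^+ (rshift m j).+1 =
              \sum_(j < m) ratr ((cl j - cr j) / 2) * w ^+ (n - j.+1).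
      rewrite (reindex_inj rev_ord_inj) /=; apply: eq_bigr => j _.
      rewrite /e sr rev_ordK; congr (_ * w ^+ _).
      by move: (ltn_ord j) Hm; lia.
    rewrite E1 E2 -!big_split; apply: eq_bigr => j _ /=.
    rewrite AB_l AB_r w_pos w_neg /cl /cr !fmorph_div rmorphD rmorphB /= rmorph_nat.
    by field.
  have e0 := indep Hn wn w1 Hm He.
  move=> k.
  have key : forall j, cl j = 0 /\ cr j = 0.
    move=> j; have h1 := e0 (lshift m j); have h2 := e0 (rshift m (rev_ord j)).
    rewrite /e sl in h1; rewrite /e sr rev_ordK in h2.
    move: h1 h2; rewrite /cl /cr => h1 h2; split; lra.
  rewrite -(splitK k); case: (split k) => j /=.
    by case: (key j).
  by case: (key j).
- move=> x Hx.
  pose V y := exists P, y = ev w P.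
  have HV : is_subfield V.
    split; first by exists 0%:P; rewrite evC rmorph0.
    split; first by exists 1%:P; rewrite evC rmorph1.
    split; first by move=> _ _ [P ->] [Q ->]; exists (P + Q); rewrite evD.
    split; first by move=> _ [P ->]; exists (- P); rewrite evN.
    split; first by move=> _ _ [P ->] [Q ->]; exists (P * Q); rewrite evM.
    move=> _ [P ->] nz; have [Q HQ] := ev_inv Hn wn w1 nz; exists Q.
    by apply: (mulIf nz); rewrite mulVf // HQ.
  have [P ->] := Hx V HV (ex_intro _ 'X (esym (evX w))).
  pose S y := exists c : 'I_(m + m) -> rat, y = \sum_(j < m + m) ratr (c j) * @AB_family R n j.
  have S0 : S 0.
    by exists (fun=> 0); rewrite big1 // => j _; rewrite rmorph0 mul0r.
  have SD : forall x y, S x -> S y -> S (x + y).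
    move=> _ _ [c1 ->] [c2 ->]; exists (fun j => c1 j + c2 j).
    by rewrite -big_split; apply: eq_bigr => j _; rewrite rmorphD mulrDl.
  have SZ : forall q x, S x -> S (ratr q * x).
    move=> q _ [c1 ->]; exists (fun j => q * c1 j).
    by rewrite mulr_sumr; apply: eq_bigr => j _; rewrite rmorphM mulrA.
  have Sb : forall k, S (@AB_family R n k).
    move=> k; exists (fun j => (j == k)%:R).
    rewrite (bigD1 k) //= eqxx rmorph1 mul1r big1 ?addr0 // => j /negPf ->.
    by rewrite rmorph0 mul0r.
  have SB : forall x y, S x -> S y -> S (x - y).
    move=> x' y' Sx Sy; apply: SD => //; rewrite -mulN1r -(rmorph1 (ratr : rat -> R[i])) -rmorphN.
    exact: SZ.
  suff : S (ev w P) by [].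
  apply: (ev_span Hn wn w1 Hm S0 SD SZ) => i.
  case: (ltnP i m) => him.
    have -> : w ^+ i.+1 = w ^+ (Ordinal him).+1 by [].
    by rewrite w_pos -AB_l -AB_r; apply: SD.
  have hj : ((m + m).-1 - i < m)%N by move: (ltn_ord i) him; lia.
  have -> : w ^+ i.+1 = w ^+ (n - (Ordinal hj).+1).
    by congr (w ^+ _); move: (ltn_ord i) him Hm => /=; lia.
  by rewrite w_neg -AB_l -AB_r; apply: SB.
Qed.
End Spec.

Theorem lemma5 (R : realType) (n : nat) (Hn : prime n) (Hodd : odd n) :
  is_Q_basis (Qadj (omega R n)) (@AB_family R n).
Proof. exact: main. Qed.
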